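(* Let $B$ be a board with $c$ colors. If, in some row or column, there are fewer than $c-1$ blank (empty) cells between some sink and the boundary of the grid, then $B$ has no perfect layout.
   Context: A board is an $m\times n$ grid of unit cells in which exactly $c$ cells are sinks, one of each of $c$ colors, and all other cells are empty. A layout places, in some of the empty cells, arrows, each having one of the $c$ colors and one of the four cardinal directions. A packet of color $i$ may enter the grid through any unit edge of the outer boundary of the grid, into the adjacent cell, moving perpendicular to that edge into the grid; it moves one cell at a time in its current direction, and whenever it enters a cell containing an arrow of color $i$ its direction becomes that arrow's direction (arrows of other colors are ignored). The packet succeeds if it enters the sink of color $i$; it fails if it enters a sink of another color, leaves the grid, or travels forever without reaching a sink. A perfect layout is a layout in which every packet of every color entering through every boundary edge succeeds. *)

(* Defs.v *)
From mathcomp Require Import all_boot.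
Set Implicit Arguments. Unset Strict Implicit. Unset Printing Implicit Defensive.

(* Cells of an m x n grid: (row, column); row 0 is the top row, column 0 the
   leftmost column. *)
Definition cell (m n : nat) := ('I_m * 'I_n)%type.

Inductive dir := Up | Down | Left | Right.

Definition move (m n : nat) (p : cell m n) (d : dir) : option (cell m n) :=
  match d with
  | Down => omap (fun i : 'I_m => (i, p.2)) (insub (p.1).+1)
  | Up => if (p.1 : nat) == 0 then None
          else omap (fun i : 'I_m => (i, p.2)) (insub (p.1).-1)
  | Right => omap (fun j : 'I_n => (p.1, j)) (insub (p.2).+1)
  | Left => if (p.2 : nat) == 0 then None
            else omap (fun j : 'I_n => (p.1, j)) (insub (p.2).-1)
  end.

(* A board: sink k is the position of the sink of color k (k : 'I_c);
   sinks are pairwise distinct (injectivity of [sink]). *)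
Definition is_sink (m n c : nat) (sink : 'I_c -> cell m n) (p : cell m n) : bool :=
  [exists k, sink k == p].

(* A layout: an optional arrow (color, direction) in each cell. *)
Definition layout (m n c : nat) := cell m n -> option ('I_c * dir).

Definition valid_layout (m n c : nat) (sink : 'I_c -> cell m n) (L : layout m n c) :=
  forall p, L p <> None -> ~~ is_sink sink p.

Inductive outcome (m n : nat) :=
  | Succ | Fail | Cont of cell m n & dir.
Arguments Succ {m n}. Arguments Fail {m n}.

(* A packet of color k has just entered cell p moving in direction d. *)
Definition step (m n c : nat) (sink : 'I_c -> cell m n) (L : layout m n c)
  (k : 'I_c) (p : cell m n) (d : dir) : outcome m n :=
  if sink k == p then Succ
  else if is_sink sink p then Fail
  else
    let d' := match L p with
              | Some (k', e) => if k' == k then e else d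
              | None => d
              end in
    match move p d' with
    | Some q => Cont q d'
    | None => Fail
    end.

Fixpoint run (m n c : nat) (sink : 'I_c -> cell m n) (L : layout m n c)
  (k : 'I_c) (t : nat) (p : cell m n) (d : dir) : outcome m n :=
  match t with
  | 0 => Cont p d
  | t'.+1 => match run sink L k t' p d with
             | Cont q e => step sink L k q e
             | r => r
             end
  end.

Definition succeeds (m n c : nat) (sink : 'I_c -> cell m n) (L : layout m n c)
  (k : 'I_c) (p : cell m n) (d : dir) : Prop :=
  exists t, run sink L k t p d = Succ.

(* (p, d) is an entry through a boundary edge: the packet enters cell p,
   moving in direction d perpendicular to a boundary edge of p on the
   side opposite to d. *)
Definition entry (m n : nat) (p : cell m n) (d : dir) : bool :=
  match d with
  | Down => (p.1 : nat) == 0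
  | Up => (p.1 : nat) == m.-1
  | Right => (p.2 : nat) == 0
  | Left => (p.2 : nat) == n.-1
  end.

Definition perfect (m n c : nat) (sink : 'I_c -> cell m n) (L : layout m n c) : Prop :=
  valid_layout sink L /\
  forall (k : 'I_c) (p : cell m n) (d : dir), entry p d -> succeeds sink L k p d.

Definition ray (m n : nat) (s : cell m n) (d : dir) : {set cell m n} :=
  [set p : cell m n |
    match d with
    | Up => (p.2 == s.2) && ((p.1 : nat) < s.1)
    | Down => (p.2 == s.2) && ((s.1 : nat) < p.1)
    | Left => (p.1 == s.1) && ((p.2 : nat) < s.2)
    | Right => (p.1 == s.1) && ((s.2 : nat) < p.2)
    end].

Definition blanks_to_boundary (m n c : nat) (sink : 'I_c -> cell m n)
  (s : cell m n) (d : dir) : nat :=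
  #|[set p in ray s d | ~~ is_sink sink p]|.

(* Main.v *)
Require Import Defs.
From mathcomp Require Import all_boot zify.
Set Implicit Arguments. Unset Strict Implicit. Unset Printing Implicit Defensive.

Lemma run_fail m n c (sink : 'I_c -> cell m n) L k p d t T :
  run sink L k t p d = Fail -> t <= T -> run sink L k T p d = Fail.
Proof.
move=> H; elim: T => [|T IH]; first by rewrite leqn0 => /eqP <-.
rewrite leq_eqVlt => /orP [/eqP <- //|]; rewrite ltnS => /IH /= -> //.
Qed.

Lemma key m n c (sink : 'I_c -> cell m n) (Hinj : injective sink) (L : layout m n c)
  (HL : perfect sink L) (e : dir) (P : nat -> cell m n) (N : nat) (A : {set cell m n}) :
  entry (P 0) e -> (forall i, i < N -> move (P i) e = Some (P i.+1)) ->
  is_sink sink (P N) -> (forall i, i < N -> P i \in A) ->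
  c.-1 <= #|[set p in A | ~~ is_sink sink p]|.
Proof.
move=> Hent Hmv HN HA.
have ex : exists i, is_sink sink (P i) := ex_intro _ N HN.
case: (ex_minnP ex) => t Ht Hmin.
have HtN : t <= N by apply: Hmin.
have Hns : forall i, i < t -> ~~ is_sink sink (P i).
  move=> i lt; apply/negP => /Hmin; by rewrite leqNgt lt.
case/existsP: Ht => i0 /eqP Hi0.
set S := [set p in A | ~~ is_sink sink p].
set f := fun p => omap fst (L p).
have Hcol : forall j, j != i0 -> Some j \in f @: S.
  move=> j Hj.
  case: (boolP [exists i : 'I_t, f (P i) == Some j]).
    case/existsP => i /eqP Hi; rewrite -Hi; apply: imset_f.
    rewrite inE HA ?Hns //; by apply: leq_trans (ltn_ord i) HtN.
  move=> Hno; exfalso.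
  have Hno' : forall i, i < t -> f (P i) != Some j.
    move=> i lt; apply/negP => Hc; move/negP: Hno; apply.
    by apply/existsP; exists (Ordinal lt).
  have Hrun : forall i, i <= t -> run sink L j i (P 0) e = Cont (P i) e.
    elim => [//|i IH] lt /=.
    rewrite IH; last exact: ltnW.
    rewrite /step.
    have ns := Hns i lt.
    have E1 : (sink j == P i) = false.
      apply/negP => /eqP E; move/negP: ns; apply; apply/existsP; exists j; by rewrite E.
    rewrite E1 (negbTE ns).
    have Hm := Hmv i (leq_trans lt HtN).
    have := Hno' i lt; rewrite /f.
    case: (L (P i)) => [[k' e0]|] /= Hk; last by rewrite Hm.
    have Hk' : (k' == j) = false by apply/negbTE; apply: contra Hk => /eqP ->.
    by rewrite Hk' Hm.
  have Hf : run sink L j t.+1 (P 0) e = Fail.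
    rewrite /= Hrun // /step -Hi0.
    have -> : (sink j == sink i0) = false by apply/negbTE; apply: contra Hj => /eqP/Hinj ->.
    have -> : is_sink sink (sink i0) by apply/existsP; exists i0.
    done.
  case: HL => _ /(_ j _ _ Hent) [T HT].
  case: (leqP T t) => lT.
    by rewrite Hrun in HT.
  by rewrite (run_fail Hf lT) in HT.
have Hsub : [set Some j | j in [set~ i0]] \subset f @: S.
  apply/subsetP => x /imsetP [j]; rewrite !inE => Hj ->; exact: Hcol.
have := subset_leq_card Hsub.
rewrite card_imset; last by move=> ? ? [].
rewrite cardsC1 card_ord => H.
by apply: leq_trans H (leq_imset_card _ _).
Qed.

Lemma vI N (u : 'I_N) k : k < N -> val (insubd u k) = k.
Proof. by move=> h; rewrite val_insubd h. Qed.

Lemma move_down m n (p q : cell m n) : (q.1 : nat) = p.1.+1 -> q.2 = p.2 -> move p Down = Some q.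
Proof.
case: q => [qa qb] /= h1 h2; case: insubP => [u _ hu|]; last by rewrite -h1 ltn_ord.
by rewrite h2; congr (Some (_, _)); apply: val_inj; rewrite /= hu h1.
Qed.

Lemma move_up m n (p q : cell m n) : (q.1 : nat).+1 = p.1 -> q.2 = p.2 -> move p Up = Some q.
Proof.
case: q => [qa qb] /= h1 h2; rewrite -h1 /=; case: insubP => [u _ hu|]; last by rewrite ltn_ord.
by rewrite h2; congr (Some (_, _)); apply: val_inj; rewrite /= hu.
Qed.

Lemma move_right m n (p q : cell m n) : (q.2 : nat) = p.2.+1 -> q.1 = p.1 -> move p Right = Some q.
Proof.
case: q => [qa qb] /= h1 h2; case: insubP => [u _ hu|]; last by rewrite -h1 ltn_ord.
by rewrite h2; congr (Some (_, _)); apply: val_inj; rewrite /= hu h1.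
Qed.

Lemma move_left m n (p q : cell m n) : (q.2 : nat).+1 = p.2 -> q.1 = p.1 -> move p Left = Some q.
Proof.
case: q => [qa qb] /= h1 h2; rewrite -h1 /=; case: insubP => [u _ hu|]; last by rewrite ltn_ord.
by rewrite h2; congr (Some (_, _)); apply: val_inj; rewrite /= hu.
Qed.

Theorem mainTheorem9 (m n c : nat) (sink : 'I_c -> cell m n)
  (Hsink : injective sink) :
  (exists (k : 'I_c) (d : dir), blanks_to_boundary sink (sink k) d < c.-1) ->
  ~ (exists L : layout m n c, perfect sink L).
Proof.
move=> [k [d Hb]] [L HL].
set s := sink k in Hb.
have Hs : is_sink sink s by apply/existsP; exists k.
case: s Hs Hb => [a b] Hs Hb.
have am := ltn_ord a; have bn := ltn_ord b.
move: Hb; rewrite /blanks_to_boundary; apply/negP; rewrite -leqNgt.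
case: d.
-
  apply: (key Hsink HL (e := Down) (P := fun i => (insubd a i, b)) (N := a)).
  + by rewrite /= vI //; lia.
  + move=> i hi; apply: move_down => //=; rewrite !vI //; lia.
  + suff -> : insubd a a = a by []. by apply: val_inj; rewrite vI.
  + move=> i hi; rewrite inE /= eqxx vI //; lia.
-
  apply: (key Hsink HL (e := Up) (P := fun i => (insubd a (m.-1 - i), b)) (N := m.-1 - a)).
  + by rewrite /= vI //; lia.
  + move=> i hi; apply: move_up => //=; rewrite !vI //; lia.
  + suff -> : insubd a (m.-1 - (m.-1 - a)) = a by []. by apply: val_inj; rewrite vI /=; lia.
  + move=> i hi; rewrite inE /= eqxx vI //=; lia.
-
  apply: (key Hsink HL (e := Right) (P := fun i => (a, insubd b i)) (N := b)).
  + by rewrite /= vI //; lia.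
  + move=> i hi; apply: move_right => //=; rewrite !vI //; lia.
  + suff -> : insubd b b = b by []. by apply: val_inj; rewrite vI.
  + move=> i hi; rewrite inE /= eqxx vI //; lia.
-
  apply: (key Hsink HL (e := Left) (P := fun i => (a, insubd b (n.-1 - i))) (N := n.-1 - b)).
  + by rewrite /= vI //; lia.
  + move=> i hi; apply: move_left => //=; rewrite !vI //; lia.
  + suff -> : insubd b (n.-1 - (n.-1 - b)) = b by []. by apply: val_inj; rewrite vI /=; lia.
  + move=> i hi; rewrite inE /= eqxx vI //=; lia.
Qed.
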